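(* Let $e_1,e_2$ be forward events in a pre-reversible LTSI satisfying IRE and RPI. Then $e_1\prec e_2$ if and only if $e_1$ is composable with $e_2$ and not $e_1\odot e_2$.
   Context: A combined LTS consists of a set $\mathsf{Proc}$ of processes, a set $\mathsf{Lab}$ of labels, a forward relation $P\xrightarrow{a}Q$ and a backward relation $P\rightsquigarrow^{a}Q$ with $P\xrightarrow aQ$ iff $Q\rightsquigarrow^aP$. A transition is a forward or backward step $t$; its inverse $\bar t$ is the same step in the opposite direction (forward becomes backward with the same label and vice versa). Transitions are coinitial if they share a source, composable if the target of the first is the source of the second. A path is a finite sequence of composable transitions; it is rooted if its source cannot perform any backward transition. An LTSI is a combined LTS together with an irreflexive symmetric relation $\iota$ on transitions. Axioms: (SP) if $t:P\to Q$ and $u:P\to R$ are coinitial with $t\mathrel\iota u$, then there are $u':Q\to S$ with the same label and direction as $u$ and $t':R\to S$ with the same label and direction as $t$; (BTI) any two distinct coinitial backward transitions are independent; (WF) there is no infinite sequence of processes $P_0,P_1,\dots$ with a forward transition $P_{i+1}\to P_i$ for all $i$; (PCI) if $t:P\to Q$, $u:P\to R$, $u':Q\to S$, $t':R\to S$ where $u'$ has the label and direction of $u$ and $t'$ those of $t$, and $t\mathrel\iota u$, then $u'\mathrel\iota\bar t$. An LTSI is pre-reversible if it satisfies SP, BTI, WF and PCI. Event equivalence $\sim$ is the smallest equivalence relation on transitions such that whenever $t,u,u',t'$ form a square as in PCI with $t\mathrel\iota u$, then $t\sim t'$. Events are $\sim$-classes $[t]$; an event is forward if it is the class of a forward transition,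 and $\bar e=[\bar t]$ for $e=[t]$. (IRE) if $t\sim t'$ and $t'\mathrel\iota u$ then $t\mathrel\iota u$. (RPI) if $t\mathrel\iota t'$ then $\bar t\mathrel\iota t'$. For a path $r$ and event $e$: $\sharp(\varepsilon,e)=0$ and $\sharp(tr,e)=\sharp(r,e)+1$ if $t\in e$, $\sharp(r,e)-1$ if $t\in\bar e$, $\sharp(r,e)$ otherwise. Core independence: $e\odot e'$ iff there are coinitial $t\in e$, $t'\in e'$ with $t\mathrel\iota t'$. For forward events: $e\le e'$ iff for every rooted path $r$, $\sharp(r,e')>0$ implies $\sharp(r,e)>0$; $e<e'$ iff $e\le e'$ and $e\ne e'$; $e_1\prec e_2$ (immediate predecessor) iff $e_1<e_2$ and there is no event $e$ with $e_1<e<e_2$. Events $e_1,e_2$ are composable if there are $t_1\in e_1$, $t_2\in e_2$ with $t_1$ composable with $t_2$. *)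

(* Defs.v *)
From Stdlib Require Import ZArith List ClassicalEpsilon.
Set Implicit Arguments.
Open Scope Z_scope.

(* A raw step: source, label, target, direction (true = forward). *)
Record rtrans (P L : Type) := mkTr { src : P; lbl : L; tgt : P; fwd : bool }.
Arguments mkTr {P L}.

Section Raw.
Variables (P L : Type) (fstep : P -> L -> P -> Prop).

(* t is an actual transition of the combined LTS: a forward step P -a-> Q,
   or a backward step Q ~>^a P, which holds iff P -a-> Q. *)
Definition valid (t : rtrans P L) : Prop :=
  if fwd t then fstep (src t) (lbl t) (tgt t)
  else fstep (tgt t) (lbl t) (src t).

Definition inv (t : rtrans P L) : rtrans P L :=
  mkTr (tgt t) (lbl t) (src t) (negb (fwd t)).
End Raw.

Record LTSI := {
  Proc : Type;
  Lab : Type;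
  fstep : Proc -> Lab -> Proc -> Prop;
  iota : rtrans Proc Lab -> rtrans Proc Lab -> Prop;
  iota_trans : forall t u, iota t u -> valid fstep t /\ valid fstep u;
  iota_irrefl : forall t, ~ iota t t;
  iota_sym : forall t u, iota t u -> iota u t
}.

Section Theory.
Variable X : LTSI.
Notation tr := (rtrans (Proc X) (Lab X)).
Notation vt := (valid (fstep X)).
Notation ι := (iota X).

(* t : P -> Q, u : P -> R, u' : Q -> S, t' : R -> S, with u' having the
   label and direction of u, and t' those of t. *)
Definition square (t u u' t' : tr) : Prop :=
  vt t /\ vt u /\ vt u' /\ vt t' /\
  src t = src u /\ src u' = tgt t /\ src t' = tgt u /\ tgt u' = tgt t' /\
  lbl u' = lbl u /\ fwd u' = fwd u /\ lbl t' = lbl t /\ fwd t' = fwd t.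

Definition SP : Prop :=
  forall t u, vt t -> vt u -> src t = src u -> ι t u ->
    exists u' t', square t u u' t'.

Definition BTI : Prop :=
  forall t u, vt t -> vt u -> src t = src u -> fwd t = false -> fwd u = false ->
    t <> u -> ι t u.

Definition WF : Prop :=
  ~ exists p : nat -> Proc X, forall i, exists a, fstep X (p (S i)) a (p i).

Definition PCI : Prop :=
  forall t u u' t', square t u u' t' -> ι t u -> ι u' (inv t).

Definition pre_reversible : Prop := SP /\ BTI /\ WF /\ PCI.

Inductive evq : tr -> tr -> Prop :=
| evq_refl : forall t, evq t t
| evq_sym : forall t u, evq t u -> evq u t
| evq_trans : forall t u v, evq t u -> evq u v -> evq t v
| evq_sq : forall t u u' t', square t u u' t' -> ι t u -> evq t t'.

Definition IRE : Prop := forall t t' u, evq t t' -> ι t' u -> ι t u.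
Definition RPI : Prop := forall t t', ι t t' -> ι (inv t) t'.

(* events are ~-classes of transitions, represented as sets *)
Definition event := tr -> Prop.
Definition is_event (e : event) : Prop :=
  exists t, vt t /\ forall u, e u <-> evq t u.
Definition is_fwd_event (e : event) : Prop :=
  exists t, vt t /\ fwd t = true /\ forall u, e u <-> evq t u.
Definition ebar (e : event) : event :=
  fun u => exists t, e t /\ evq (inv t) u.
Definition ev_eq (e e' : event) : Prop := forall u, e u <-> e' u.

Fixpoint is_path (p : Proc X) (r : list tr) : Prop :=
  match r with
  | nil => True
  | t :: r' => vt t /\ src t = p /\ is_path (tgt t) r'
  end.
Definition rooted (p : Proc X) : Prop := forall q a, ~ fstep X q a p.

Definition contrib (t : tr) (e : event) : Z :=
  if excluded_middle_informative (e t) then 1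
  else if excluded_middle_informative (ebar e t) then -1 else 0.

Fixpoint sharp (r : list tr) (e : event) : Z :=
  match r with
  | nil => 0
  | t :: r' => sharp r' e + contrib t e
  end.

Definition ev_le (e e' : event) : Prop :=
  forall p r, rooted p -> is_path p r -> sharp r e' > 0 -> sharp r e > 0.
Definition ev_lt (e e' : event) : Prop := ev_le e e' /\ ~ ev_eq e e'.
Definition ev_prec (e1 e2 : event) : Prop :=
  ev_lt e1 e2 /\ ~ exists e, is_fwd_event e /\ ev_lt e1 e /\ ev_lt e e2.

Definition core_indep (e e' : event) : Prop :=
  exists t t', e t /\ e' t' /\ src t = src t' /\ ι t t'.

Definition ev_composable (e1 e2 : event) : Prop :=
  exists t1 t2, e1 t1 /\ e2 t2 /\ tgt t1 = src t2.
End Theory.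

(* Main.v *)
Require Import Defs.
From Stdlib Require Import ZArith List Lia Classical ClassicalEpsilon.
Import ListNotations.
Open Scope Z_scope.
Set Implicit Arguments.

Notation tr X := (rtrans (Proc X) (Lab X)).
Notation vt X := (valid (fstep X)).
Notation cls X t := (fun u => evq X t u).

Lemma inv_inv (P L : Type) (t : rtrans P L) : inv (inv t) = t.
Proof. destruct t as [a b c d]; unfold inv; simpl; rewrite Bool.negb_involutive; reflexivity. Qed.

Lemma valid_inv (P L : Type) (f : P -> L -> P -> Prop) (t : rtrans P L) : valid f t -> valid f (inv t).
Proof. destruct t as [a b c [|]]; unfold valid, inv; simpl; auto. Qed.

Lemma evq_valid (X : LTSI) t u : evq X t u -> t = u \/ (vt X t /\ vt X u).
Proof.
  induction 1 as [t|t u H IH|t u v H1 IH1 H2 IH2|t u u' t' Hs Hi].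
  - left; auto.
  - destruct IH as [->|[]]; auto.
  - destruct IH1 as [->|[]]; destruct IH2 as [->|[]]; auto.
  - right. destruct Hs as (?&?&?&?&_). auto.
Qed.

Lemma evq_fwd (X : LTSI) t u : evq X t u -> fwd t = fwd u.
Proof.
  induction 1; try congruence.
  destruct H as (_&_&_&_&_&_&_&_&_&_&_&->). auto.
Qed.

Lemma square_sym (X : LTSI) t u u' t' : square X t u u' t' -> square X u t t' u'.
Proof. unfold square; intuition congruence. Qed.

Lemma evq_sq2 (X : LTSI) t u u' t' : square X t u u' t' -> iota X t u -> evq X u u'.
Proof. intros Hs Hi. eapply evq_sq; [apply square_sym; exact Hs|]. apply iota_sym; auto. Qed.

Lemma evq_inv (X : LTSI) t u : PCI X -> evq X t u -> evq X (inv t) (inv u).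
Proof.
  intros Hp. induction 1 as [t|t u H IH|t u v H1 IH1 H2 IH2|t u u' t' Hs Hi].
  - constructor.
  - apply evq_sym; auto.
  - eapply evq_trans; eauto.
  - pose proof (Hp _ _ _ _ Hs Hi) as Hi2.
    assert (Hs2 : square X u' (inv t) (inv t') u).
    { destruct Hs as (v1&v2&v3&v4&e1&e2&e3&e4&e5&e6&e7&e8).
      unfold square; unfold inv; simpl.
      repeat split; auto; try congruence; try (apply valid_inv; assumption).
      all: rewrite e8; auto. }
    eapply evq_sq; [apply square_sym; exact Hs2|]. apply iota_sym; auto.
Qed.

Lemma ev_closed (X : LTSI) (e : event X) u v : is_fwd_event e -> e u -> evq X u v -> e v.
Proof.
  intros (t0&_&_&He) Hu Huv. apply He. apply He in Hu. eapply evq_trans; eauto.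
Qed.

Lemma ev_closed' (X : LTSI) (e : event X) u v : is_fwd_event e -> e u -> evq X v u -> e v.
Proof. intros; eapply ev_closed; eauto. apply evq_sym; auto. Qed.

Lemma ev_fwd (X : LTSI) (e : event X) u : is_fwd_event e -> e u -> fwd u = true /\ vt X u.
Proof.
  intros (t0&Hv&Hf&He) Hu. apply He in Hu.
  split. rewrite <- (evq_fwd Hu); auto.
  destruct (evq_valid Hu) as [<-|[]]; auto.
Qed.

Lemma cls_fwd (X : LTSI) (t : tr X) : vt X t -> fwd t = true -> is_fwd_event (cls X t).
Proof. intros. exists t; split; auto; split; auto; tauto. Qed.

Lemma cls_mem (X : LTSI) (e : event X) t : is_fwd_event e -> e t -> forall u, e u <-> evq X t u.
Proof.
  intros He Ht u; split; intro H.
  - destruct He as (t0&_&_&He). apply He in Ht. apply He in H.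
    eapply evq_trans; [apply evq_sym; eauto| auto].
  - eapply ev_closed; eauto.
Qed.

Lemma ebar_iff (X : LTSI) (e : event X) u : PCI X -> is_fwd_event e -> (ebar e u <-> e (inv u)).
Proof.
  intros Hp He; split.
  - intros (t&Ht&Hq). eapply ev_closed; eauto.
    rewrite <- (inv_inv t). apply evq_inv; auto.
  - intros H. exists (inv u). split; auto. rewrite inv_inv. constructor.
Qed.

Lemma contrib_f1 (X : LTSI) (e : event X) u : e u -> contrib u e = 1.
Proof. intros H. unfold contrib. destruct excluded_middle_informative; tauto. Qed.

Lemma contrib_f0 (X : LTSI) (e : event X) u : PCI X -> is_fwd_event e -> fwd u = true -> ~ e u -> contrib u e = 0.
Proof.
  intros Hp He Hf H. unfold contrib. destruct excluded_middle_informative; [tauto|].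
  destruct excluded_middle_informative as [Hb|]; auto.
  apply (ebar_iff _ Hp He) in Hb. apply (ev_fwd _ He) in Hb. destruct Hb as [Hb _].
  destruct u; simpl in *; subst; discriminate.
Qed.

Lemma contrib_b1 (X : LTSI) (e : event X) u : PCI X -> is_fwd_event e -> fwd u = false -> e (inv u) -> contrib u e = -1.
Proof.
  intros Hp He Hf H. unfold contrib. destruct excluded_middle_informative as [Hu|].
  { apply (ev_fwd _ He) in Hu. destruct Hu; congruence. }
  destruct excluded_middle_informative as [Hb|Hb]; auto.
  exfalso; apply Hb. apply ebar_iff; auto.
Qed.

Lemma contrib_b0 (X : LTSI) (e : event X) u : PCI X -> is_fwd_event e -> fwd u = false -> ~ e (inv u) -> contrib u e = 0.
Proof.
  intros Hp He Hf H. unfold contrib. destruct excluded_middle_informative as [Hu|].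
  { apply (ev_fwd _ He) in Hu. destruct Hu; congruence. }
  destruct excluded_middle_informative as [Hb|Hb]; auto.
  exfalso; apply H. apply ebar_iff; auto.
Qed.

Lemma contrib_ble (X : LTSI) (e : event X) u : PCI X -> is_fwd_event e -> fwd u = false -> contrib u e <= 0.
Proof.
  intros Hp He Hf. destruct (classic (e (inv u))).
  - rewrite contrib_b1; auto; lia.
  - rewrite contrib_b0; auto; lia.
Qed.

Lemma contrib_range (X : LTSI) (e : event X) u : contrib u e = 1 \/ contrib u e = -1 \/ contrib u e = 0.
Proof. unfold contrib. repeat destruct excluded_middle_informative; auto. Qed.

Lemma contrib_neg (X : LTSI) (e : event X) u : PCI X -> is_fwd_event e -> contrib u e < 0 -> fwd u = false /\ e (inv u).
Proof.
  intros Hp He. unfold contrib. destruct excluded_middle_informative as [Hu|]; [lia|].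
  destruct excluded_middle_informative as [Hb|]; [|lia]. intros _.
  apply (ebar_iff _ Hp He) in Hb. split; auto.
  apply (ev_fwd _ He) in Hb. destruct Hb as [Hb _]. destruct u as [a b c d]; simpl in *. destruct d; simpl in *; congruence.
Qed.

Lemma contrib_inv (X : LTSI) (e : event X) u : PCI X -> is_fwd_event e -> contrib (inv u) e = - contrib u e.
Proof.
  intros Hp He. destruct (fwd u) eqn:Hf.
  - assert (Hf' : fwd (inv u) = false) by (unfold inv; simpl; rewrite Hf; auto).
    destruct (classic (e u)).
    + rewrite (contrib_f1 e u H). rewrite (contrib_b1 (inv u) Hp He Hf'); [lia|]. rewrite inv_inv; auto.
    + rewrite (contrib_f0 u Hp He Hf H). rewrite (contrib_b0 (inv u) Hp He Hf'); [lia|]. rewrite inv_inv; auto.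
  - assert (Hf' : fwd (inv u) = true) by (unfold inv; simpl; rewrite Hf; auto).
    destruct (classic (e (inv u))).
    + rewrite (contrib_b1 u Hp He Hf H). rewrite (contrib_f1 e (inv u) H). lia.
    + rewrite (contrib_b0 u Hp He Hf H). rewrite (contrib_f0 (inv u) Hp He Hf' H). lia.
Qed.

Lemma contrib_evq (X : LTSI) (e : event X) u v : PCI X -> is_fwd_event e -> evq X u v -> contrib u e = contrib v e.
Proof.
  intros Hp He Huv. pose proof (evq_fwd Huv) as Hf.
  destruct (fwd u) eqn:Hu.
  - destruct (classic (e u)) as [H|H].
    + rewrite (contrib_f1 e u H), (contrib_f1 e v (ev_closed He H Huv)); auto.
    + rewrite (contrib_f0 u Hp He Hu H). rewrite (contrib_f0 v Hp He (eq_sym Hf)); auto.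
      intro Hv; apply H; exact (ev_closed' He Hv Huv).
  - assert (Hi : evq X (inv u) (inv v)) by (apply evq_inv; auto).
    destruct (classic (e (inv u))) as [H|H].
    + rewrite (contrib_b1 u Hp He Hu H), (contrib_b1 v Hp He (eq_sym Hf) (ev_closed He H Hi)); auto.
    + rewrite (contrib_b0 u Hp He Hu H). rewrite (contrib_b0 v Hp He (eq_sym Hf)); auto.
      intro Hv; apply H; exact (ev_closed' He Hv Hi).
Qed.

Lemma class_share (X : LTSI) (e e' : event X) x : is_fwd_event e -> is_fwd_event e' -> e x -> e' x -> ev_eq e e'.
Proof.
  intros He He' H1 H2 u. rewrite (cls_mem _ He H1), (cls_mem _ He' H2). tauto.
Qed.

Lemma contrib_ext (X : LTSI) (e e' : event X) t : (forall u, e u <-> e' u) -> contrib t e = contrib t e'.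
Proof.
  intros H. unfold contrib, ebar.
  repeat destruct excluded_middle_informative; auto; exfalso;
  try (match goal with h : ~ _ |- _ => apply h end); firstorder.
Qed.

Lemma sharp_ext (X : LTSI) (e e' : event X) r : (forall u, e u <-> e' u) -> sharp r e = sharp r e'.
Proof. intros H; induction r as [|a r IHr]; simpl; auto. rewrite IHr; f_equal; apply contrib_ext; auto. Qed.

Lemma ev_le_ext (X : LTSI) (e1 e2 e1' e2' : event X) :
  (forall u, e1 u <-> e1' u) -> (forall u, e2 u <-> e2' u) -> ev_le e1 e2 -> ev_le e1' e2'.
Proof.
  intros H1 H2 H p r Hr Hp Hs. rewrite <- (sharp_ext _ _ r H1). apply (H p r Hr Hp).
  rewrite (sharp_ext _ _ r H2); auto.
Qed.

Lemma ev_le_trans (X : LTSI) (e1 e2 e3 : event X) : ev_le e1 e2 -> ev_le e2 e3 -> ev_le e1 e3.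
Proof. intros H1 H2 p r Hr Hp Hs. eauto. Qed.

Definition Hyp (X : LTSI) := pre_reversible X /\ IRE X /\ RPI X.
Lemma hSP X : Hyp X -> SP X. Proof. intros ((?&?&?&?)&?&?); auto. Qed.
Lemma hBTI X : Hyp X -> BTI X. Proof. intros ((?&?&?&?)&?&?); auto. Qed.
Lemma hWF X : Hyp X -> WF X. Proof. intros ((?&?&?&?)&?&?); auto. Qed.
Lemma hPCI X : Hyp X -> PCI X. Proof. intros ((?&?&?&?)&?&?); auto. Qed.
Lemma hIRE X : Hyp X -> IRE X. Proof. intros ((?&?&?&?)&?&?); auto. Qed.
Lemma hRPI X : Hyp X -> RPI X. Proof. intros ((?&?&?&?)&?&?); auto. Qed.

Definition Rp (X : LTSI) (A B : Proc X) := exists a, fstep X A a B.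

Fixpoint pend (X : LTSI) (p : Proc X) (r : list (tr X)) : Proc X :=
  match r with nil => p | t :: r' => pend X (tgt t) r' end.

Definition mbp (X : LTSI) (q : Proc X) (b : list (tr X)) :=
  is_path X q b /\ Forall (fun t => fwd t = false) b /\ rooted X (pend X q b).

Lemma valid_bwd (X : LTSI) (w : tr X) : vt X w -> fwd w = false -> fstep X (tgt w) (lbl w) (src w).
Proof. unfold valid. intros H Hf; rewrite Hf in H; auto. Qed.

Lemma valid_fwd (X : LTSI) (w : tr X) : vt X w -> fwd w = true -> fstep X (src w) (lbl w) (tgt w).
Proof. unfold valid. intros H Hf; rewrite Hf in H; auto. Qed.

Lemma wfR (X : LTSI) : WF X -> well_founded (Rp X).
Proof.
  intros Hwf B. apply NNPP. intro HB.
  assert (step : forall B, ~ Acc (Rp X) B -> exists A, Rp X A B /\ ~ Acc (Rp X) A).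
  { intros B' H. apply NNPP. intro H2. apply H. constructor. intros A HA.
    apply NNPP. intro H3. apply H2. eauto. }
  assert (f : forall s : {B | ~ Acc (Rp X) B}, {s' : {B | ~ Acc (Rp X) B} | Rp X (proj1_sig s') (proj1_sig s)}).
  { intros [B' H]. destruct (constructive_indefinite_description _ (step B' H)) as [A [HA HnA]].
    exists (exist _ A HnA). simpl. auto. }
  pose (g := fun s => proj1_sig (f s)).
  pose (p := fun n => proj1_sig (Nat.iter n g (exist _ B HB))).
  apply Hwf. exists p. intro i. unfold p. simpl.
  destruct (proj2_sig (f (Nat.iter i g (exist _ B HB)))) as [a Ha]. exists a. exact Ha.
Qed.

Lemma not_rooted (X : LTSI) (q : Proc X) : ~ rooted X q -> exists p a, fstep X p a q.
Proof.
  intros H. apply NNPP. intro H2. apply H. intros p a Hf. apply H2. eauto.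
Qed.

Lemma mbp_exists (X : LTSI) : WF X -> forall q, exists b, mbp X q b.
Proof.
  intros Hwf q. induction q as [q IH] using (well_founded_ind (wfR Hwf)).
  destruct (classic (rooted X q)) as [Hr|Hr].
  - exists nil. unfold mbp; simpl; auto.
  - destruct (not_rooted Hr) as (p&a&Hf).
    destruct (IH p (ex_intro _ a Hf)) as (b&Hb1&Hb2&Hb3).
    exists (mkTr q a p false :: b). unfold mbp; simpl. repeat split; auto.
Qed.

Lemma rooted_nil (X : LTSI) q b : rooted X q -> mbp X q b -> b = nil.
Proof.
  intros Hr [Hp [Hf _]]. destruct b as [|w b]; auto. exfalso.
  simpl in Hp. destruct Hp as (Hv&Hs&_). inversion Hf; subst.
  apply (Hr (tgt w) (lbl w)). apply valid_bwd; auto.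
Qed.

Lemma K (X : LTSI) (e : event X) : Hyp X -> is_fwd_event e ->
  forall q b1 b2, mbp X q b1 -> mbp X q b2 -> sharp b1 e = sharp b2 e.
Proof.
  intros HH He q. induction q as [q IH] using (well_founded_ind (wfR (hWF HH))).
  intros b1 b2 H1 H2.
  destruct b1 as [|w1 b1].
  { destruct H1 as (_&_&Hr). simpl in Hr. rewrite (rooted_nil Hr H2). auto. }
  destruct b2 as [|w2 b2].
  { destruct H2 as (_&_&Hr). simpl in Hr. rewrite (rooted_nil Hr H1). auto. }
  destruct H1 as ((Hv1&Hs1&Hp1)&Hf1&Hr1). destruct H2 as ((Hv2&Hs2&Hp2)&Hf2&Hr2).
  apply Forall_cons_iff in Hf1 as [Hw1 Hf1']. apply Forall_cons_iff in Hf2 as [Hw2 Hf2']. subst q.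
  simpl in Hr1, Hr2.
  assert (R1 : Rp X (tgt w1) (src w1)) by (exists (lbl w1); apply valid_bwd; auto).
  assert (R2 : Rp X (tgt w2) (src w1)) by (exists (lbl w2); rewrite <- Hs2; apply valid_bwd; auto).
  destruct (classic (w1 = w2)) as [<-|Hne].
  - simpl. rewrite (IH _ R1 b1 b2); auto; repeat split; auto.
  - assert (Hi : iota X w1 w2) by (apply (hBTI HH); auto; congruence).
    destruct (hSP HH w1 w2 Hv1 Hv2 ltac:(congruence) Hi) as (w2'&w1'&Hsq).
    pose proof Hsq as (v1&v2&v3&v4&e1&e2&e3&e4&e5&e6&e7&e8).
    destruct (mbp_exists (hWF HH) (tgt w2')) as (c&Hc1&Hc2&Hc3).
    assert (E1 : sharp b1 e = sharp (w2' :: c) e).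
    { apply (IH _ R1); repeat split; auto. constructor; auto; congruence. }
    assert (E2 : sharp b2 e = sharp (w1' :: c) e).
    { apply (IH _ R2); unfold mbp; simpl; repeat split; auto; try rewrite <- e4; auto; try congruence.
      constructor; auto; congruence. }
    simpl in *. rewrite E1, E2.
    rewrite (contrib_evq (hPCI HH) He (evq_sq Hsq Hi)).
    rewrite (contrib_evq (hPCI HH) He (evq_sq2 Hsq Hi)). lia.
Qed.

Definition D (X : LTSI) (q : Proc X) (e : event X) : Z :=
  match excluded_middle_informative (exists b, mbp X q b) with
  | left H => - sharp (proj1_sig (constructive_indefinite_description _ H)) e
  | right _ => 0
  end.
Arguments D : clear implicits.

Lemma D_spec (X : LTSI) (e : event X) q b : Hyp X -> is_fwd_event e -> mbp X q b -> D X q e = - sharp b e.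
Proof.
  intros HH He Hb. unfold D. destruct excluded_middle_informative as [H|H]; [|exfalso; eauto].
  destruct constructive_indefinite_description as [b' Hb']; simpl.
  f_equal. apply (K HH He Hb' Hb).
Qed.

Lemma sharp_bwd_le (X : LTSI) (e : event X) b : PCI X -> is_fwd_event e ->
  Forall (fun t => fwd t = false) b -> sharp b e <= 0.
Proof.
  intros Hp He H. induction H as [|w b Hw H IH]; simpl; auto. lia.
  pose proof (contrib_ble w Hp He Hw). lia.
Qed.

Lemma D_nonneg (X : LTSI) (e : event X) q : Hyp X -> is_fwd_event e -> D X q e >= 0.
Proof.
  intros HH He. destruct (mbp_exists (hWF HH) q) as [b Hb].
  rewrite (D_spec HH He Hb). destruct Hb as (_&Hf&_).
  pose proof (sharp_bwd_le (hPCI HH) He Hf). lia.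
Qed.

Lemma D_step (X : LTSI) (e : event X) t : Hyp X -> is_fwd_event e -> vt X t ->
  D X (tgt t) e = D X (src t) e + contrib t e.
Proof.
  intros HH He Hv. destruct (fwd t) eqn:Hf.
  - destruct (mbp_exists (hWF HH) (src t)) as [bA HA].
    assert (HB : mbp X (tgt t) (inv t :: bA)).
    { destruct HA as (H1&H2&H3). unfold mbp; simpl. repeat split; auto.
      apply valid_inv; auto. constructor; auto; unfold inv; simpl; rewrite Hf; auto. }
    rewrite (D_spec HH He HA), (D_spec HH He HB). simpl.
    rewrite (contrib_inv t (hPCI HH) He). lia.
  - destruct (mbp_exists (hWF HH) (tgt t)) as [bB HB].
    assert (HA : mbp X (src t) (t :: bB)).
    { destruct HB as (H1&H2&H3). unfold mbp; simpl. repeat split; auto. }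
    rewrite (D_spec HH He HA), (D_spec HH He HB). simpl. lia.
Qed.

Lemma sharp_app (X : LTSI) (e : event X) l1 l2 : sharp (l1 ++ l2) e = sharp l1 e + sharp l2 e.
Proof. induction l1; simpl; auto. rewrite IHl1. lia. Qed.

Lemma pend_app (X : LTSI) p l1 l2 : pend X p (l1 ++ l2) = pend X (pend X p l1) l2.
Proof. revert p; induction l1; simpl; auto. Qed.

Lemma is_path_app (X : LTSI) p l1 l2 : is_path X p (l1 ++ l2) <-> is_path X p l1 /\ is_path X (pend X p l1) l2.
Proof.
  revert p; induction l1 as [|t l1 IH]; intros p; simpl. tauto.
  rewrite IH. tauto.
Qed.

Lemma D_path (X : LTSI) (e : event X) r : Hyp X -> is_fwd_event e ->
  forall p, is_path X p r -> sharp r e = D X (pend X p r) e - D X p e.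
Proof.
  intros HH He. induction r as [|t r IH]; intros p Hp; simpl. lia.
  destruct Hp as (Hv&Hs&Hp). rewrite (IH _ Hp). rewrite (D_step t HH He Hv). subst p. lia.
Qed.

Lemma D_rooted (X : LTSI) (e : event X) p : Hyp X -> is_fwd_event e -> rooted X p -> D X p e = 0.
Proof.
  intros HH He Hr. rewrite (D_spec (b := nil) HH He). auto.
  unfold mbp; simpl; auto.
Qed.

Lemma rooted_path_to (X : LTSI) : WF X -> forall q, exists p r, rooted X p /\ is_path X p r /\ pend X p r = q.
Proof.
  intros Hwf q. induction q as [q IH] using (well_founded_ind (wfR Hwf)).
  destruct (classic (rooted X q)) as [Hr|Hr].
  - exists q, nil. simpl; auto.
  - destruct (not_rooted Hr) as (p&a&Hf).
    destruct (IH p (ex_intro _ a Hf)) as (p0&r&H1&H2&H3).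
    exists p0, (r ++ mkTr p a q true :: nil). split; auto. split.
    + apply is_path_app. split; auto. rewrite H3. simpl. auto.
    + rewrite pend_app, H3. auto.
Qed.

Lemma LE_D (X : LTSI) (e e' : event X) : Hyp X -> is_fwd_event e -> is_fwd_event e' ->
  (ev_le e e' <-> forall q, D X q e' > 0 -> D X q e > 0).
Proof.
  intros HH He He'. split.
  - intros H q Hq. destruct (rooted_path_to (hWF HH) q) as (p&r&Hr&Hp&Hq').
    specialize (H p r Hr Hp).
    rewrite (D_path r HH He p Hp), (D_path r HH He' p Hp) in H.
    rewrite (D_rooted HH He Hr), (D_rooted HH He' Hr) in H. subst q. lia.
  - intros H p r Hr Hp. rewrite (D_path r HH He p Hp), (D_path r HH He' p Hp).
    rewrite (D_rooted HH He Hr), (D_rooted HH He' Hr).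
    intros. assert (D X (pend X p r) e > 0) by (apply H; lia). lia.
Qed.

Lemma sharp_split (X : LTSI) (e : event X) b : sharp b e < 0 ->
  exists pre w post, b = pre ++ w :: post /\ contrib w e < 0.
Proof.
  induction b as [|t b IH]; simpl; intros H. lia.
  destruct (Z_lt_le_dec (contrib t e) 0) as [Hc|Hc].
  - exists nil, t, b. auto.
  - destruct IH as (pre&w&post&->&Hw). lia. exists (t :: pre), w, post. auto.
Qed.

Lemma Hist (X : LTSI) (e : event X) q : Hyp X -> is_fwd_event e -> D X q e > 0 ->
  exists pre w, is_path X q pre /\ Forall (fun t => fwd t = false) pre /\ pend X q pre = src w /\
    vt X w /\ fwd w = false /\ e (inv w).
Proof.
  intros HH He Hq. destruct (mbp_exists (hWF HH) q) as [b Hb].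
  rewrite (D_spec HH He Hb) in Hq.
  destruct (sharp_split e b ltac:(lia)) as (pre&w&post&->&Hw).
  destruct (contrib_neg w (hPCI HH) He Hw) as [Hf Hi].
  destruct Hb as (Hp&Hf'&_). apply is_path_app in Hp as [Hp1 Hp2].
  apply Forall_app in Hf' as [Hf1 _].
  simpl in Hp2. destruct Hp2 as (Hv&Hs&_).
  exists pre, w. repeat split; auto.
Qed.

Lemma D_bwd_path (X : LTSI) (e : event X) q pre : Hyp X -> is_fwd_event e ->
  is_path X q pre -> Forall (fun t => fwd t = false) pre -> D X (pend X q pre) e <= D X q e.
Proof.
  intros HH He Hp Hf. pose proof (D_path pre HH He q Hp).
  pose proof (sharp_bwd_le (hPCI HH) He Hf). lia.
Qed.

Lemma contrib_one (X : LTSI) (e : event X) u : contrib u e = 1 -> e u.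
Proof. unfold contrib. repeat destruct excluded_middle_informative; auto; lia. Qed.

Lemma INV (X : LTSI) (e e' : event X) : Hyp X -> is_fwd_event e -> is_fwd_event e' ->
  ~ core_indep e' e -> forall x y, e x -> e y -> D X (src x) e' = D X (src y) e'.
Proof.
  intros HH He He' Hni.
  assert (G : forall a b, evq X a b -> e a -> D X (src a) e' = D X (src b) e').
  { induction 1 as [t|t u H IH|t u v H1 IH1 H2 IH2|t u u' t' Hs Hi]; intros Ha.
    - auto.
    - symmetry. apply IH. exact (ev_closed' He Ha H).
    - rewrite IH1; auto. apply IH2. exact (ev_closed He Ha H1).
    - pose proof Hs as (v1&v2&v3&v4&e1&e2&e3&e4&e5&e6&e7&e8).
      rewrite e3, (D_step u HH He' v2), <- e1.
      destruct (contrib_range e' u) as [Hc|[Hc|Hc]]; [exfalso|exfalso|lia].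
      + apply Hni. exists u, t. repeat split; auto. apply contrib_one; auto. apply iota_sym; auto.
      + assert (Hc' : contrib u e' < 0) by lia.
        destruct (contrib_neg u (hPCI HH) He' Hc') as [Hf Hinv].
        apply Hni. exists (inv u), t'. repeat split; auto.
        * exact (ev_closed He Ha (evq_sq Hs Hi)).
        * apply (hRPI HH). apply iota_sym. apply (hIRE HH) with t; auto.
          apply evq_sym. exact (evq_sq Hs Hi). }
  intros x y Hx Hy. apply G; auto. apply (cls_mem _ He Hx). auto.
Qed.

Lemma no_self (X : LTSI) (e : event X) : Hyp X -> is_fwd_event e -> ~ core_indep e e.
Proof.
  intros HH He (a&b&Ha&Hb&_&Hi).
  assert (Hab : evq X a b) by (apply (cls_mem _ He Ha); auto).
  apply (iota_irrefl X a). apply (hIRE HH) with b; auto. apply iota_sym; auto.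
Qed.

Lemma AtMostOnce (X : LTSI) (e : event X) x : Hyp X -> is_fwd_event e -> e x -> D X (src x) e = 0.
Proof.
  intros HH He Hx. pose proof (D_nonneg (src x) HH He).
  destruct (Z.eq_dec (D X (src x) e) 0) as [|Hne]; auto. exfalso.
  destruct (Hist (src x) HH He ltac:(lia)) as (pre&w&Hp&Hf&Hpe&Hv&Hw&Hi).
  pose proof (INV HH He He (no_self HH He) x (inv w) Hx Hi) as E. simpl in E.
  rewrite (D_step w HH He Hv) in E. rewrite (contrib_b1 w (hPCI HH) He Hw Hi) in E.
  pose proof (D_bwd_path _ HH He Hp Hf). rewrite Hpe in H0. lia.
Qed.

Lemma CausalLE (X : LTSI) (e1 e2 : event X) t1 t2 : Hyp X -> is_fwd_event e1 -> is_fwd_event e2 ->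
  e1 t1 -> e2 t2 -> tgt t1 = src t2 -> ~ core_indep e1 e2 -> ev_le e1 e2.
Proof.
  intros HH He1 He2 H1 H2 Hc Hni. apply (LE_D HH He1 He2). intros q Hq.
  destruct (Hist q HH He2 Hq) as (pre&w&Hp&Hf&Hpe&Hv&Hw&Hi).
  pose proof (INV HH He2 He1 Hni (inv w) t2 Hi H2) as E. simpl in E.
  rewrite <- Hc in E. destruct (ev_fwd _ He1 H1) as [Hf1 Hv1].
  rewrite (D_step t1 HH He1 Hv1), (contrib_f1 e1 t1 H1) in E.
  rewrite (D_step w HH He1 Hv) in E. pose proof (contrib_ble w (hPCI HH) He1 Hw).
  pose proof (D_bwd_path _ HH He1 Hp Hf). rewrite Hpe in H0.
  pose proof (D_nonneg (src t1) HH He1). lia.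
Qed.

Lemma CausalNeq (X : LTSI) (e1 e2 : event X) t1 t2 : Hyp X -> is_fwd_event e1 -> is_fwd_event e2 ->
  e1 t1 -> e2 t2 -> tgt t1 = src t2 -> ~ core_indep e1 e2 -> ~ ev_eq e1 e2.
Proof.
  intros HH He1 He2 H1 H2 Hc Hni Heq.
  pose proof (INV HH He2 He1 Hni t1 t2 (proj1 (Heq t1) H1) H2) as E.
  rewrite <- Hc in E. destruct (ev_fwd _ He1 H1) as [Hf1 Hv1].
  rewrite (D_step t1 HH He1 Hv1), (contrib_f1 e1 t1 H1) in E. lia.
Qed.

Lemma LG (X : LTSI) (e e' : event X) z y : Hyp X -> (forall u, e u -> evq X z u) -> (forall u, e' u -> evq X y u) ->
  ~ iota X z y -> ~ core_indep e e'.
Proof.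
  intros HH H1 H2 Hn (a&b&Ha&Hb&_&Hi). apply Hn.
  assert (Hzb : iota X z b) by (apply (hIRE HH) with a; auto).
  apply iota_sym. apply (hIRE HH) with b; auto. apply iota_sym; auto.
Qed.

Lemma Bub (X : LTSI) : Hyp X -> forall b q, is_path X q b -> Forall (fun t => fwd t = false) b ->
  forall z, vt X z -> fwd z = true -> tgt z = pend X q b ->
  exists y, vt X y /\ fwd y = true /\ tgt y = q /\ ev_le (cls X z) (cls X y).
Proof.
  intros HH b. induction b as [|w b IH]; intros q Hp Hf z Hvz Hfz Hz.
  - exists z. repeat split; auto. intros p r _ _ H; auto.
  - destruct Hp as (Hv&Hs&Hp). apply Forall_cons_iff in Hf as [Hw Hf].
    destruct (IH (tgt w) Hp Hf z Hvz Hfz Hz) as (y1&Hv1&Hf1&Ht1&Hle1).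
    assert (Hvv : vt X (inv w)) by (apply valid_inv; auto).
    assert (Hfv : fwd (inv w) = true) by (unfold inv; simpl; rewrite Hw; auto).
    destruct (classic (iota X y1 (inv w))) as [Hi|Hn].
    + pose proof (hRPI HH _ _ Hi) as Hi2.
      assert (Hvi : vt X (inv y1)) by (apply valid_inv; auto).
      destruct (hSP HH (inv y1) (inv w) Hvi Hvv ltac:(simpl; auto) Hi2) as (c&d&Hsq).
      pose proof Hsq as (v1&v2&v3&v4&e1&e2&e3&e4&e5&e6&e7&e8).
      assert (Hq : evq X (inv y1) d) by exact (evq_sq Hsq Hi2).
      assert (Hq' : evq X y1 (inv d)) by (rewrite <- (inv_inv y1) at 1; apply evq_inv; auto; apply (hPCI HH)).
      exists (inv d). repeat split.
      * apply valid_inv; auto.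
      * unfold inv; simpl. rewrite e8. simpl. rewrite Hf1. auto.
      * simpl. rewrite e3. simpl. auto.
      * apply (ev_le_ext (e1 := cls X z) (e2 := cls X y1)); auto.
        -- tauto.
        -- intros u; split; intro H. eapply evq_trans; [apply evq_sym; exact Hq'|exact H].
           eapply evq_trans; [exact Hq'|exact H].
    + assert (Hni : ~ core_indep (cls X y1) (cls X (inv w))) by (apply (LG HH (z := y1) (y := inv w)); auto).
      pose proof (CausalLE y1 (inv w) HH (cls_fwd X y1 Hv1 Hf1) (cls_fwd X (inv w) Hvv Hfv)
        (evq_refl X y1) (evq_refl X (inv w)) ltac:(simpl; auto) Hni) as Hle2.
      exists (inv w). repeat split; auto.
      eapply ev_le_trans; eauto.
Qed.

Lemma MinX (X : LTSI) (e : event X) : Hyp X -> is_fwd_event e -> forall q x, e x -> src x = q ->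
  exists x', e x' /\ forall w, vt X w -> fwd w = false -> src w = src x' -> ~ iota X x' w.
Proof.
  intros HH He q. induction q as [q IH] using (well_founded_ind (wfR (hWF HH))).
  intros x Hx Hs.
  destruct (classic (exists w, vt X w /\ fwd w = false /\ src w = src x /\ iota X x w)) as [(w&Hv&Hf&Hsw&Hi)|Hno].
  - destruct (ev_fwd _ He Hx) as [Hfx Hvx].
    destruct (hSP HH x w Hvx Hv (eq_sym Hsw) Hi) as (w'&x'&Hsq).
    pose proof Hsq as (v1&v2&v3&v4&e1&e2&e3&e4&e5&e6&e7&e8).
    apply (IH (tgt w)) with x'.
    + exists (lbl w). rewrite <- Hs, <- Hsw. apply valid_bwd; auto.
    + exact (ev_closed He Hx (evq_sq Hsq Hi)).
    + auto.
  - exists x. split; auto. intros w Hv Hf Hsw Hi. apply Hno. eauto 6.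
Qed.

Theorem lemma5p10 (L : LTSI) (e1 e2 : event L) :
  pre_reversible L -> IRE L -> RPI L ->
  is_fwd_event e1 -> is_fwd_event e2 ->
  (ev_prec e1 e2 <-> ev_composable e1 e2 /\ ~ core_indep e1 e2).
Proof.
  intros Hpr Hire Hrpi He1 He2.
  assert (HH : Hyp L) by (split; auto).
  split.
  - intros [[Hle Hneq] Hnb].
    assert (F : forall y, e2 y -> ~ e1 y).
    { intros y H2 H1. apply Hneq. exact (class_share _ He1 He2 H1 H2). }
    split.
    + pose proof He2 as (t0&Hv0&Hf0&Hc0).
      assert (H0 : e2 t0) by (apply Hc0; constructor).
      destruct (MinX HH He2 t0 H0 eq_refl) as (x&Hx&Hmin).
      destruct (ev_fwd _ He2 Hx) as [Hfx Hvx].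
      assert (P1 : D L (tgt x) e2 > 0).
      { rewrite (D_step x HH He2 Hvx), (contrib_f1 e2 x Hx).
        pose proof (D_nonneg (src x) HH He2). lia. }
      apply (LE_D HH He1 He2) in P1; auto.
      rewrite (D_step x HH He1 Hvx), (contrib_f0 x (hPCI HH) He1 Hfx (F x Hx)) in P1.
      destruct (Hist (src x) HH He1 ltac:(lia)) as (pre&w&Hp&Hf&Hpe&Hv&Hw&Hi).
      destruct (@Bub L HH pre (src x) Hp Hf (inv w) ltac:(apply valid_inv; auto)
        ltac:(unfold inv; simpl; rewrite Hw; auto) ltac:(simpl; auto)) as (y&Hvy&Hfy&Hty&Hley).
      destruct (classic (e1 y)) as [Hy|Hy].
      * exists y, x. auto.
      * exfalso. apply Hnb. exists (cls L y). split; [apply cls_fwd; auto|].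
        assert (Hnyx : ~ iota L y x).
        { intros Hi2. apply (Hmin (inv y)).
          - apply valid_inv; auto.
          - unfold inv; simpl; rewrite Hfy; auto.
          - simpl; auto.
          - apply iota_sym. apply (hRPI HH). auto. }
        assert (Hni : ~ core_indep (cls L y) e2).
        { apply (LG HH (z := y) (y := x)); auto. intros u Hu. apply (cls_mem _ He2 Hx); auto. }
        split; split.
        -- apply (ev_le_ext (e1 := cls L (inv w)) (e2 := cls L y)); auto.
           ++ intros u. symmetry. apply (cls_mem _ He1 Hi).
           ++ tauto.
        -- intros Heq. apply Hy. apply (Heq y). constructor.
        -- exact (CausalLE y x HH (cls_fwd L y Hvy Hfy) He2 (evq_refl L y) Hx ltac:(auto) Hni).
        -- exact (CausalNeq y x HH (cls_fwd L y Hvy Hfy) He2 (evq_refl L y) Hx ltac:(auto) Hni).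
    + intros (x&y&Hx&Hy&Hs&_).
      destruct (ev_fwd _ He2 Hy) as [Hfy Hvy].
      assert (P1 : D L (tgt y) e2 > 0).
      { rewrite (D_step y HH He2 Hvy), (contrib_f1 e2 y Hy).
        pose proof (D_nonneg (src y) HH He2). lia. }
      apply (LE_D HH He1 He2) in P1; auto.
      rewrite (D_step y HH He1 Hvy), (contrib_f0 y (hPCI HH) He1 Hfy (F y Hy)) in P1.
      rewrite <- Hs, (AtMostOnce x HH He1 Hx) in P1. lia.
  - intros [(t1&t2&H1&H2&Hc) Hni].
    split.
    + split.
      * exact (CausalLE t1 t2 HH He1 He2 H1 H2 Hc Hni).
      * exact (CausalNeq t1 t2 HH He1 He2 H1 H2 Hc Hni).
    + intros (e&He&[Hle1 Hn1]&[Hle2 Hn2]).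
      destruct (ev_fwd _ He1 H1) as [Hf1 Hv1]. destruct (ev_fwd _ He2 H2) as [Hf2 Hv2].
      assert (P1 : D L (tgt t2) e2 > 0).
      { rewrite (D_step t2 HH He2 Hv2), (contrib_f1 e2 t2 H2).
        pose proof (D_nonneg (src t2) HH He2). lia. }
      apply (LE_D HH He He2) in P1; auto.
      assert (N2 : ~ e t2) by (intro H; apply Hn2; exact (class_share _ He He2 H H2)).
      assert (N1 : ~ e t1) by (intro H; apply Hn1; exact (class_share _ He1 He H1 H)).
      rewrite (D_step t2 HH He Hv2), (contrib_f0 t2 (hPCI HH) He Hf2 N2), <- Hc in P1.
      rewrite (D_step t1 HH He Hv1), (contrib_f0 t1 (hPCI HH) He Hf1 N1) in P1.
      rewrite !Z.add_0_r in P1. apply (proj1 (LE_D HH He1 He) Hle1) in P1.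
      rewrite (AtMostOnce t1 HH He1 H1) in P1. lia.
Qed.
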